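(* Let $F:\mathbb{R}^d\to[0,\infty)$ be differentiable and $\mu$-strongly convex ($\mu>0$), let $\lambda_t>0$, $\epsilon_t\in[0,1)$, and $x_{t-1}\in\mathbb{R}^d$. Let $F_{\lambda_t,x_{t-1}}(x)=F(x)+\lambda_t\|x-x_{t-1}\|_2^2$ with unique minimizer $x^\star_{\lambda_t,x_{t-1}}$, and let $x_t\in\mathbb{R}^d$ satisfy $F_{\lambda_t,x_{t-1}}(x_t)\le(1+\epsilon_t)F_{\lambda_t,x_{t-1}}(x^\star_{\lambda_t,x_{t-1}})$. Let $r_t^\star=\|x_{t-1}-x^\star_{\lambda_t,x_{t-1}}\|_2$. Then $$\|x_t-x_{t-1}\|_2\le\sqrt{\frac{2\epsilon_t}{2\lambda_t+\mu}F(x_{t-1})}+\frac{\|\nabla F(x_{t-1})\|_2}{2\lambda_t+\mu}$$ and $$\|x_t-x_{t-1}\|_2\ge r_t^\star-\sqrt{\frac{2\epsilon_t}{2\lambda_t+\mu}F(x_{t-1})}.$$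
   Context: $F$ is $\mu$-strongly convex if $F(u)\ge F(v)+\langle\nabla F(v),u-v\rangle+\frac\mu2\|u-v\|_2^2$ for all $u,v$. *)

(* Defs.v *)
From Stdlib Require Import Reals.
From mathcomp Require Import all_boot.

Set Implicit Arguments.
Unset Strict Implicit.

Open Scope R_scope.

Definition vec (d : nat) := 'I_d -> R.

Definition vadd d (u v : vec d) : vec d := fun i => u i + v i.
Definition vsub d (u v : vec d) : vec d := fun i => u i - v i.

Definition dot d (u v : vec d) : R := \big[Rplus/0]_(i < d) (u i * v i).
Definition norm2 d (u : vec d) : R := sqrt (dot u u).

Definition has_gradient d (F : vec d -> R) (x g : vec d) : Prop :=
  forall eps : R, 0 < eps -> exists delta : R, 0 < delta /\
    forall h : vec d, norm2 h < delta ->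
      Rabs (F (vadd x h) - F x - dot g h) <= eps * norm2 h.

Definition strongly_convex d (F : vec d -> R) (gradF : vec d -> vec d) (mu : R) : Prop :=
  forall u v : vec d,
    F u >= F v + dot (gradF v) (vsub u v) + mu / 2 * (norm2 (vsub u v)) ^ 2.

Definition Fprox d (F : vec d -> R) (lam : R) (y x : vec d) : R :=
  F x + lam * (norm2 (vsub x y)) ^ 2.

(* Main.v *)
Require Import Defs.
From HB Require Import structures.
From Stdlib Require Import Reals Lra Psatz.
From mathcomp Require Import all_boot.
Open Scope R_scope.
Set Implicit Arguments.

Lemma Rplus_assoc' : associative Rplus.
Proof. move=> x y z; ring. Qed.
HB.instance Definition _ := Monoid.isComLaw.Build R 0 Rplus Rplus_assoc' Rplus_comm Rplus_0_l.

Lemma sum_scale d k (f : 'I_d -> R) :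
  k * \big[Rplus/0]_(i < d) f i = \big[Rplus/0]_(i < d) (k * f i).
Proof.
apply: (big_ind2 (fun x y => k * x = y)); first ring.
  by move=> x1 x2 y1 y2 <- <-; ring.
by [].
Qed.

Lemma combo4 d k1 k2 k3 k4 (a1 b1 a2 b2 a3 b3 a4 b4 : vec d) :
  k1 * dot a1 b1 + k2 * dot a2 b2 + k3 * dot a3 b3 + k4 * dot a4 b4 =
  \big[Rplus/0]_(i < d) (k1 * (a1 i * b1 i) + k2 * (a2 i * b2 i)
      + k3 * (a3 i * b3 i) + k4 * (a4 i * b4 i)).
Proof.
rewrite /dot !sum_scale.
by rewrite !big_split.
Qed.

Lemma dot_ge0 d (u : vec d) : 0 <= dot u u.
Proof.
rewrite /dot; apply: (big_ind (fun x => 0 <= x)).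
- lra.
- move=> x y; lra.
- move=> i _; nra.
Qed.

Lemma norm2_sq d (u : vec d) : norm2 u ^ 2 = dot u u.
Proof. rewrite /norm2 /= Rmult_1_r; apply: sqrt_sqrt; exact: dot_ge0. Qed.

Lemma norm2_ge0 d (u : vec d) : 0 <= norm2 u.
Proof. exact: sqrt_pos. Qed.

Lemma dot0 d (u : vec d) : dot u u = 0 -> forall i, u i = 0.
Proof.
move=> H i.
have: u i * u i + \big[Rplus/0]_(j < d | j != i) (u j * u j) = 0.
  by rewrite -(bigD1 _ (P := xpredT)).
have : 0 <= \big[Rplus/0]_(j < d | j != i) (u j * u j).
  apply: (big_ind (fun x => 0 <= x)); [lra| move=> x y; lra | move=> j _; nra].
move=> *; nra.
Qed.

Ltac combo_solve := rewrite combo4; apply: big1 => i _; rewrite /vsub /vadd; ring.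

Lemma dot_zero_l d (u v : vec d) : dot u u = 0 -> dot u v = 0.
Proof.
move=> H; have Hu := dot0 H.
rewrite /dot; apply: big1 => i _; rewrite Hu; ring.
Qed.

Lemma cs d (u v : vec d) : dot u v <= norm2 u * norm2 v.
Proof.
have Ha := norm2_sq u; have Hb := norm2_sq v.
have a0 := norm2_ge0 u; have b0 := norm2_ge0 v.
set a := norm2 u in Ha a0 *; set b := norm2 v in Hb b0 *.
case: (Req_dec a 0) => [a0'|an].
  rewrite dot_zero_l; [nra| rewrite -Ha a0'; ring].
case: (Req_dec b 0) => [b0'|bn].
  have : dot v u = 0 by rewrite dot_zero_l // -Hb b0'; ring.
  have -> : dot u v = dot v u.
    have : 1 * dot u v + (-1) * dot v u + 0 * dot u u + 0 * dot u u = 0 by combo_solve.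
    lra.
  move=> ->; nra.
pose w : vec d := fun i => b * u i - a * v i.
have Hw : 1 * dot w w + (-(b^2)) * dot u u + (2*a*b) * dot u v + (-(a^2)) * dot v v = 0.
  by rewrite combo4; apply: big1 => i _; rewrite /w; ring.
have := dot_ge0 w.
have ab : 0 < a * b by apply: Rmult_lt_0_compat; lra.
rewrite -Ha -Hb in Hw.
move=> Hww.
have : a * b * (2 * (a * b - dot u v)) >= 0 by nra.
move=> H.
have : 0 <= 2 * (a*b - dot u v).
  apply: (Rmult_le_reg_l (a*b)) => //; lra.
lra.
Qed.

Lemma tri d (u v w : vec d) : (forall i, w i = u i + v i) ->
  norm2 w <= norm2 u + norm2 v.
Proof.
move=> Hw.
have E : 1 * dot w w + (-1) * dot u u + (-2) * dot u v + (-1) * dot v v = 0.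
  by rewrite combo4; apply: big1 => i _; rewrite Hw; ring.
have := cs u v; have := norm2_sq u; have := norm2_sq v; have := norm2_sq w.
have := norm2_ge0 u; have := norm2_ge0 v; have := norm2_ge0 w.
move=> *; nra.
Qed.

Lemma norm2_swap d (u v : vec d) : norm2 (vsub u v) = norm2 (vsub v u).
Proof.
rewrite /norm2; f_equal.
have : 1 * dot (vsub u v) (vsub u v) + (-1) * dot (vsub v u) (vsub v u) + 0 * dot u u + 0 * dot u u = 0 by combo_solve.
lra.
Qed.

Lemma optimality d (F : vec d -> R) (gradF : vec d -> vec d) (lam : R) (p s : vec d) :
  (forall x : vec d, has_gradient F x (gradF x)) -> 0 < lam ->
  (forall x : vec d, Fprox F lam p s <= Fprox F lam p x) ->
  forall i, gradF s i + 2 * lam * (s i - p i) = 0.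
Proof.
move=> Hg Hl Hmin.
pose a : vec d := fun i => gradF s i + 2 * lam * (s i - p i).
suff: dot a a = 0 by move/dot0.
have A0 := dot_ge0 a.
case: (Req_dec (dot a a) 0) => // An; exfalso.
set A := dot a a in A0 An.
have Ap : 0 < A by lra.
have sA : 0 < sqrt A by apply: sqrt_lt_R0.
have sAA : sqrt A * sqrt A = A by apply: sqrt_sqrt; lra.
have [delta [dpos Hd]] := Hg s (sqrt A / 2) ltac:(lra).
pose t := Rmin (delta / (2 * sqrt A)) (1 / (4 * lam)).
have tpos : 0 < t.
  apply: Rmin_pos; apply: Rdiv_lt_0_compat; lra.
have t1 : t <= delta / (2 * sqrt A) by apply: Rmin_l.
have t2 : t <= 1 / (4 * lam) by apply: Rmin_r.
have t1' : t * (2 * sqrt A) <= delta.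
  have E : delta / (2 * sqrt A) * (2 * sqrt A) = delta by field; lra.
  nra.
have t2' : lam * t <= 1/4.
  have E : 1 / (4 * lam) * lam = 1/4 by field; lra.
  nra.
pose h : vec d := fun i => - t * a i.
have Hhh : 1 * dot h h + (- t^2) * dot a a + 0 * dot a a + 0 * dot a a = 0.
  by rewrite combo4; apply: big1 => i _; rewrite /h; ring.
have Nh : norm2 h = t * sqrt A.
  rewrite /norm2.
  have -> : dot h h = (t * sqrt A)^2 by rewrite -/A in Hhh; nra.
  apply: sqrt_pow2; nra.
have Hdh := Hd h ltac:(rewrite Nh; nra).
rewrite Nh in Hdh.
have Hm := Hmin (vadd s h).
rewrite /Fprox !norm2_sq in Hm.
have I1 : 1 * dot (vsub (vadd s h) p) (vsub (vadd s h) p) + (-1) * dot (vsub s p) (vsub s p)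
   + (-2) * dot (vsub s p) h + (-1) * dot h h = 0 by combo_solve.
have I2 : 1 * dot (gradF s) h + (2 * lam) * dot (vsub s p) h + t * dot a a + 0 * dot a a = 0.
  by rewrite combo4; apply: big1 => i _; rewrite /h /a /vsub; ring.
have Hab := Rle_abs (F (vadd s h) - F s - dot (gradF s) h).
rewrite -/A in I2 Hhh.
have : 0 <= - t * A + t * A / 2 + lam * t^2 * A.
  have E1 : lam * dot (vsub (vadd s h) p) (vsub (vadd s h) p) =
      lam * dot (vsub s p) (vsub s p) + 2 * lam * dot (vsub s p) h + lam * dot h h.
    nra.
  have E2 : dot h h = t ^ 2 * A by lra.
  rewrite E2 in E1.
  nra.
have tA : 0 < t * A by nra.
move=> H; nra.
Qed.

Unset Implicit Arguments.

Theorem corollaryC1 (d : nat) (F : vec d -> R) (gradF : vec d -> vec d)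
  (mu lam eps : R) (xprev xstar xt : vec d) :
  (forall x : vec d, 0 <= F x) ->
  (forall x : vec d, has_gradient F x (gradF x)) ->
  0 < mu ->
  strongly_convex F gradF mu ->
  0 < lam ->
  0 <= eps < 1 ->
  (forall x : vec d, Fprox F lam xprev xstar <= Fprox F lam xprev x) ->
  Fprox F lam xprev xt <= (1 + eps) * Fprox F lam xprev xstar ->
  norm2 (vsub xt xprev) <=
    sqrt (2 * eps / (2 * lam + mu) * F xprev) + norm2 (gradF xprev) / (2 * lam + mu)
  /\
  norm2 (vsub xt xprev) >=
    norm2 (vsub xprev xstar) - sqrt (2 * eps / (2 * lam + mu) * F xprev).
Proof.
move=> F0 Hg mu0 Hsc lam0 [e0 e1] Hmin Hxt.
set p := xprev in Hmin Hxt *; set s := xstar in Hmin Hxt *.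
have Hopt := @optimality d F gradF lam p s Hg lam0 Hmin.
have c0 : 0 < 2 * lam + mu by lra.
have Sc1 := Hsc xt s.
rewrite !norm2_sq in Sc1.
have I1 : lam * dot (vsub xt p) (vsub xt p) + (- lam) * dot (vsub xt s) (vsub xt s)
   + (-2 * lam) * dot (vsub s p) (vsub xt s) + (- lam) * dot (vsub s p) (vsub s p) = 0
   by combo_solve.
have I2 : 1 * dot (gradF s) (vsub xt s) + (2 * lam) * dot (vsub s p) (vsub xt s)
   + 0 * dot s s + 0 * dot s s = 0.
  rewrite combo4; apply: big1 => i _.
  have -> : gradF s i = - (2 * lam * (s i - p i)) by have := Hopt i; lra.
  rewrite /vsub; ring.
have Grow : Fprox F lam p xt >= Fprox F lam p s + (lam + mu/2) * dot (vsub xt s) (vsub xt s).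
  rewrite /Fprox !norm2_sq; lra.
have Ipp : dot (vsub p p) (vsub p p) = 0.
  rewrite /dot; apply: big1 => i _; rewrite /vsub; ring.
have Gs : Fprox F lam p s <= F p.
  have := Hmin p; rewrite /Fprox !norm2_sq Ipp; lra.
have Gs0 : 0 <= Fprox F lam p s.
  rewrite /Fprox; have := F0 s; have := norm2_ge0 (vsub s p); nra.
have Nts : (2 * lam + mu) * dot (vsub xt s) (vsub xt s) <= 2 * eps * F p by nra.
have Bts : norm2 (vsub xt s) <= sqrt (2 * eps / (2 * lam + mu) * F p).
  rewrite /norm2; apply: sqrt_le_1_alt.
  have -> : 2 * eps / (2 * lam + mu) * F p = (2 * eps * F p) / (2 * lam + mu) by field; lra.
  apply: (Rmult_le_reg_r (2 * lam + mu)) => //.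
  have -> : 2 * eps * F p / (2 * lam + mu) * (2 * lam + mu) = 2 * eps * F p by field; lra.
  lra.
have Sa := Hsc p s; have Sb := Hsc s p.
rewrite !norm2_sq in Sa Sb.
have J1 : 1 * dot (vsub p s) (vsub p s) + (-1) * dot (vsub s p) (vsub s p) + 0 * dot s s + 0 * dot s s = 0
  by combo_solve.
have J2 : 1 * dot (gradF s) (vsub p s) + (- 2 * lam) * dot (vsub s p) (vsub s p) + 0 * dot s s + 0 * dot s s = 0.
  rewrite combo4; apply: big1 => i _.
  have -> : gradF s i = - (2 * lam * (s i - p i)) by have := Hopt i; lra.
  rewrite /vsub; ring.
have CS := cs (gradF p) (vsub s p).
have CS' := cs (fun i => - gradF p i) (vsub s p).
have J3 : 1 * dot (fun i => - gradF p i) (vsub s p) + 1 * dot (gradF p) (vsub s p) + 0 * dot s s + 0 * dot s s = 0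
  by combo_solve.
have Ng : norm2 (fun i => - gradF p i) = norm2 (gradF p).
  rewrite /norm2; f_equal.
  have : 1 * dot (fun i => - gradF p i) (fun i => - gradF p i) + (-1) * dot (gradF p) (gradF p) + 0 * dot s s + 0 * dot s s = 0 by combo_solve.
  lra.
rewrite Ng in CS'.
have Hr2 := norm2_sq (vsub s p).
have r0 := norm2_ge0 (vsub s p).
have g0 := norm2_ge0 (gradF p).
set r := norm2 (vsub s p) in Hr2 r0 CS CS' *.
set g := norm2 (gradF p) in g0 CS CS' *.
have cr : (2 * lam + mu) * (r * r) <= g * r.
  have : (2 * lam + mu) * dot (vsub s p) (vsub s p) <= - dot (gradF p) (vsub s p) by nra.
  have -> : dot (vsub s p) (vsub s p) = r * r by rewrite -Hr2; ring.
  lra.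
have Br : r <= g / (2 * lam + mu).
  apply: (Rmult_le_reg_r (2 * lam + mu)) => //.
  have -> : g / (2 * lam + mu) * (2 * lam + mu) = g by field; lra.
  case: (Req_dec r 0) => [->|rn]; first lra.
  have rp : 0 < r by lra.
  nra.
have T1 : norm2 (vsub xt p) <= norm2 (vsub xt s) + r.
  apply: tri => i; rewrite /vsub; ring.
have T2 : norm2 (vsub p s) <= norm2 (vsub p xt) + norm2 (vsub xt s).
  apply: tri => i; rewrite /vsub; ring.
rewrite (norm2_swap p xt) in T2.
split; lra.
Qed.
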